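(* Let $\mathcal V_0 = [(\underline v_{t|0})_{t=0}^{T-1}, (\bar v_{t|0})_{t=0}^{T-1}]$ be an interval and let $\mathcal V_1 := [(\underline v_{1|0}, \ldots, \underline v_{T-1|0}, 0), (\bar v_{1|0}, \ldots, \bar v_{T-1|0}, 1)]$ (with $0, 1 \in \mathbb R^{m_u}$ the all-zero and all-one vectors). Let $x_0, x_1 \in \mathbb R^{n_x}$ be arbitrary. Suppose $\{\lambda_{t|0}, \rho_{t|0}\}_{t=0}^{T}$ and $\{\mu_{t|0}, \underline\nu_{t|0}, \bar\nu_{t|0}, \sigma_{t|0}\}_{t=0}^{T-1}$ are feasible multipliers for $\mathbf D(\mathcal V_0; x_0)$. Define - $(\lambda_{t|1}, \rho_{t|1}) := (\lambda_{t+1|0}, \rho_{t+1|0})$ for $t = 0, \ldots, T-1$, - $(\lambda_{T|1}, \rho_{T|1}) := 0$, - $(\mu_{t|1}, \underline\nu_{t|1}, \bar\nu_{t|1}, \sigma_{t|1}) := (\mu_{t+1|0}, \underline\nu_{t+1|0}, \bar\nu_{t+1|0}, \sigma_{t+1|0})$ for $t = 0, \ldots, T-2$, - $(\mu_{T-1|1}, \underline\nu_{T-1|1}, \bar\nu_{T-1|1}, \sigma_{T-1|1}) := 0$. Then $\{\lambda_{t|1}, \rho_{t|1}\}_{t=0}^{T}$, $\{\mu_{t|1}, \underline\nu_{t|1}, \bar\nu_{t|1}, \sigma_{t|1}\}_{t=0}^{T-1}$ are feasible multipliers for $\mathbf D(\mathcal V_1; x_1)$.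
   Context: Fix integers $n_x, n_u, m_u \ge 0$ and $T \ge 1$. Let $A \in \mathbb R^{n_x \times n_x}$, $B \in \mathbb R^{n_x \times (n_u+m_u)}$, and let $F, G, h$ be a matrix pair and vector defining the polyhedron $\mathcal D = \{(x,u) \in \mathbb R^{n_x} \times \mathbb R^{n_u+m_u} : F x + G u \le h\}$, assumed to contain the origin. Let $V \in \mathbb R^{m_u \times (n_u+m_u)}$ be the selection matrix extracting the $m_u$ binary entries of an input vector $u$. Let $Q$ (with $n_x$ columns) and $R$ (with $n_u + m_u$ columns) be weight matrices, possibly rank deficient. An interval is a set $\mathcal V = [(\underline v_t)_{t=0}^{T-1}, (\bar v_t)_{t=0}^{T-1}] \subset \mathbb R^{T m_u}$ with $\underline v_t, \bar v_t \in \{0,1\}^{m_u}$, $\underline v_t \le \bar v_t$. For an interval $\mathcal V$ and an initial state $\xi \in \mathbb R^{n_x}$, the QP $\mathbf P(\mathcal V; \xi)$ is: minimize $\sum_{t=0}^T |Q x_t|^2 + \sum_{t=0}^{T-1} |R u_t|^2$ over $x_0,\ldots,x_T \in \mathbb R^{n_x}$, $u_0, \ldots, u_{T-1} \in \mathbb R^{n_u+m_u}$ subject to $x_0 = \xi$, $x_{t+1} = A x_t + B u_t$, $(x_t, u_t) \in \mathcal D$, $\underline v_t \le V u_t \le \bar v_t$ for $t = 0, \ldots, T-1$. Its Lagrangian dual $\mathbf D(\mathcal V; \xi)$ is: maximize $$-\sum_{t=0}^{T} |\rho_t/2|^2 - \sum_{t=0}^{T-1}\big(|\sigma_t/2|^2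 + h'\mu_t + \bar v_t'\bar\nu_t - \underline v_t'\underline\nu_t\big) - \xi'\lambda_0$$ over multipliers $\{\lambda_t, \rho_t\}_{t=0}^T$, $\{\mu_t, \underline\nu_t, \bar\nu_t, \sigma_t\}_{t=0}^{T-1}$ of appropriate dimensions subject to: $Q'\rho_t + \lambda_t - A'\lambda_{t+1} + F'\mu_t = 0$ for $t=0,\ldots,T-1$; $Q'\rho_T + \lambda_T = 0$; $R'\sigma_t - B'\lambda_{t+1} + G'\mu_t + V'(\bar\nu_t - \underline\nu_t) = 0$ for $t = 0, \ldots, T-1$; $(\mu_t, \underline\nu_t, \bar\nu_t) \ge 0$ for $t=0,\ldots,T-1$. ''Feasible multipliers'' means a point satisfying these constraints. $|\cdot|$ is the Euclidean norm and $'$ denotes transpose. *)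

(* Defs.v *)
From HB Require Import structures.
From mathcomp Require Import all_boot all_order all_algebra.
Set Implicit Arguments. Unset Strict Implicit. Unset Printing Implicit Defensive.
Import Order.TTheory GRing.Theory Num.Theory.
Local Open Scope ring_scope.

Definition nonneg_cV (R : realFieldType) (k : nat) (v : 'cV[R]_k) : Prop :=
  forall i : 'I_k, 0 <= v i ord0.

Definition is_interval (R : realFieldType) (m T : nat)
    (vl vu : nat -> 'cV[R]_m) : Prop :=
  forall t, (t < T)%N -> forall i : 'I_m,
    (vl t i ord0 = 0 \/ vl t i ord0 = 1) /\
    (vu t i ord0 = 0 \/ vu t i ord0 = 1) /\
    vl t i ord0 <= vu t i ord0.

(* Multiplier sequences are indexed by nat; only indices
   t <= T (for lam, rho) and t < T (for mu, nul, nuu, sig) matter.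
   The interval (vl, vu) and the initial state xi only enter the dual objective,
   not its constraints; they are kept as arguments to mirror "D(V; xi)". *)
Definition dual_feasible (K : realFieldType) (nx nu m p q r T : nat)
    (A : 'M[K]_nx) (B : 'M[K]_(nx, nu)) (F : 'M[K]_(p, nx)) (G : 'M[K]_(p, nu))
    (V : 'M[K]_(m, nu)) (Q : 'M[K]_(q, nx)) (R : 'M[K]_(r, nu))
    (vl vu : nat -> 'cV[K]_m) (xi : 'cV[K]_nx)
    (lam : nat -> 'cV[K]_nx) (rho : nat -> 'cV[K]_q)
    (mu : nat -> 'cV[K]_p) (nul nuu : nat -> 'cV[K]_m) (sig : nat -> 'cV[K]_r)
    : Prop :=
  (forall t, (t < T)%N ->
     Q^T *m rho t + lam t - A^T *m lam t.+1 + F^T *m mu t = 0) /\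
  Q^T *m rho T + lam T = 0 /\
  (forall t, (t < T)%N ->
     R^T *m sig t - B^T *m lam t.+1 + G^T *m mu t + V^T *m (nuu t - nul t) = 0) /\
  (forall t, (t < T)%N ->
     nonneg_cV (mu t) /\ nonneg_cV (nul t) /\ nonneg_cV (nuu t)).

(* Main.v *)
Require Import Defs.
From HB Require Import structures.
From mathcomp Require Import all_boot all_order all_algebra.
Import Order.TTheory GRing.Theory Num.Theory.
Local Open Scope ring_scope.

Theorem lemma1 (K : realFieldType) (nx n_u m_u p q r T : nat) (HT : (1 <= T)%N)
    (A : 'M[K]_nx) (B : 'M[K]_(nx, n_u + m_u))
    (F : 'M[K]_(p, nx)) (G : 'M[K]_(p, n_u + m_u))
    (V : 'M[K]_(m_u, n_u + m_u)) (Q : 'M[K]_(q, nx)) (R : 'M[K]_(r, n_u + m_u))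
    (vl0 vu0 : nat -> 'cV[K]_m_u) (x0 x1 : 'cV[K]_nx)
    (lam0 : nat -> 'cV[K]_nx) (rho0 : nat -> 'cV[K]_q)
    (mu0 : nat -> 'cV[K]_p) (nul0 nuu0 : nat -> 'cV[K]_m_u)
    (sig0 : nat -> 'cV[K]_r) :
  is_interval T vl0 vu0 ->
  dual_feasible T A B F G V Q R vl0 vu0 x0 lam0 rho0 mu0 nul0 nuu0 sig0 ->
  let vl1 := fun t => if (t < T.-1)%N then vl0 t.+1 else 0 in
  let vu1 := fun t => if (t < T.-1)%N then vu0 t.+1 else const_mx 1 in
  let lam1 := fun t => if (t < T)%N then lam0 t.+1 else 0 in
  let rho1 := fun t => if (t < T)%N then rho0 t.+1 else 0 in
  let mu1 := fun t => if (t < T.-1)%N then mu0 t.+1 else 0 in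
  let nul1 := fun t => if (t < T.-1)%N then nul0 t.+1 else 0 in
  let nuu1 := fun t => if (t < T.-1)%N then nuu0 t.+1 else 0 in
  let sig1 := fun t => if (t < T.-1)%N then sig0 t.+1 else 0 in
  dual_feasible T A B F G V Q R vl1 vu1 x1 lam1 rho1 mu1 nul1 nuu1 sig1.
Proof.
move=> _ [H1 [H2 [H3 H4]]] vl1 vu1 lam1 rho1 mu1 nul1 nuu1 sig1.
have TE : T = T.-1.+1 by rewrite prednK.
split; [|split; [|split]].
- move=> t ltT; rewrite /lam1 /rho1 /mu1 ltT.
  case: (ltnP t T.-1) => ht.
  + have -> : (t.+1 < T)%N by rewrite TE ltnS.
    rewrite ?ht.
    by apply: H1; rewrite TE ltnS.
  + have et : t = T.-1 by apply/eqP; rewrite eqn_leq ht andbT -ltnS -TE.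
    rewrite et -TE ltnn mulmx0 mulmx0 subr0 addr0; exact: H2.
- by rewrite /rho1 /lam1 ltnn mulmx0 addr0.
- move=> t ltT; rewrite /lam1 /sig1 /mu1 /nuu1 /nul1.
  case: (ltnP t T.-1) => ht.
  + have -> : (t.+1 < T)%N by rewrite TE ltnS.
    rewrite ?ht.
    by rewrite ?ht; apply: H3; rewrite TE ltnS.
  + have et : t = T.-1 by apply/eqP; rewrite eqn_leq ht andbT -ltnS -TE.
    rewrite et -TE ltnn subrr !mulmx0 subr0 !addr0.
    by [].
- move=> t ltT; rewrite /mu1 /nul1 /nuu1.
  case: (ltnP t T.-1) => ht.
  + apply: H4; by rewrite TE ltnS.
  + by split; [|split] => i; rewrite mxE.
Qed.
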